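(* Let $R$ be an associative ring and $S=\begin{pmatrix}A&B\\ C&D\end{pmatrix}$ a non-commuting switch over $R$. Let $P=A^{-1}B^{-1}A$ and $Q=B^{-1}(1-A)$. For $n\ge2$ and $1\le i\le n-1$ let $S_i=I_{i-1}\oplus S\oplus I_{n-i-1}$ be the $n\times n$ block-diagonal matrix. Then $$(P^{n-1},\ldots,P,1)\,S_i=(P^{n-1},\ldots,P,1)\quad\text{and}\quad S_i\,(1,Q,\ldots,Q^{n-1})^T=(1,Q,\ldots,Q^{n-1})^T.$$
   Context: A non-commuting switch over $R$ is $S=\begin{pmatrix}A&B\\ C&D\end{pmatrix}$ where $A$, $A-1$, $B$ are invertible elements of $R$ that do not commute and satisfy the fundamental equation $A^{-1}B^{-1}AB-BA^{-1}B^{-1}A=B^{-1}AB-A$, and $C=A^{-1}B^{-1}A(1-A)$, $D=1-A^{-1}B^{-1}AB$. *)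

(* Defs.v *)
From HB Require Import structures.
From mathcomp Require Import all_boot all_order all_algebra.
Set Implicit Arguments. Unset Strict Implicit. Unset Printing Implicit Defensive.
Import GRing.Theory.
Local Open Scope ring_scope.

Definition noncomm_switch (R : unitRingType) (A B : R) : Prop :=
  [/\ A \is a GRing.unit, (A - 1) \is a GRing.unit, B \is a GRing.unit,
      A * B != B * A &
      A^-1 * B^-1 * A * B - B * A^-1 * B^-1 * A = B^-1 * A * B - A].

Definition switchC (R : unitRingType) (A B : R) : R := A^-1 * B^-1 * A * (1 - A).
Definition switchD (R : unitRingType) (A B : R) : R := 1 - A^-1 * B^-1 * A * B.

(* S_i = I_{i-1} (+) S (+) I_{n-i-1}, an n x n matrix over R (1 <= i <= n-1):
   S occupies (1-indexed) rows/columns i, i+1, i.e. 0-indexed positions i-1, i. *)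
Definition switch_mx (R : unitRingType) (A B : R) (n i : nat) : 'M[R]_n :=
  \matrix_(j < n, k < n)
    if (j == i.-1 :> nat) && (k == i.-1 :> nat) then A
    else if (j == i.-1 :> nat) && (k == i :> nat) then B
    else if (j == i :> nat) && (k == i.-1 :> nat) then switchC A B
    else if (j == i :> nat) && (k == i :> nat) then switchD A B
    else (j == k)%:R.

(* Main.v *)
Require Import Defs.
From mathcomp Require Import all_boot all_order all_algebra.
From mathcomp Require Import zify.
Import GRing.Theory.
Local Open Scope ring_scope.

Lemma sum2 {R : unitRingType} {n} {ia ib : 'I_n} {F : 'I_n -> R} :
  ia != ib -> (forall j, j != ia -> j != ib -> F j = 0) ->
  \sum_j F j = F ia + F ib.
Proof.
move=> hab H; rewrite (bigD1 ia) //= (bigD1 ib) /=; last by rewrite eq_sym.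
rewrite big1 ?addr0 // => j /andP[jb ja]; exact: H.
Qed.

Lemma sum1 {R : unitRingType} {n} (k : 'I_n) {F : 'I_n -> R} :
  (forall j, j != k -> F j = 0) -> \sum_j F j = F k.
Proof.
move=> H; rewrite (bigD1 k) //= big1 ?addr0 // => j; exact: H.
Qed.

Theorem lemma9p2 (R : unitRingType) (A B : R) (n i : nat) :
  noncomm_switch A B -> (2 <= n)%N -> (1 <= i)%N -> (i <= n - 1)%N ->
  let P := A^-1 * B^-1 * A in
  let Q := B^-1 * (1 - A) in
  (\row_(j < n) P ^+ (n - 1 - j)) *m switch_mx A B n i = \row_(j < n) P ^+ (n - 1 - j)
  /\ switch_mx A B n i *m (\col_(j < n) Q ^+ j) = \col_(j < n) Q ^+ j.
Proof.
case=> uA uA1 uB _ _ n2; case: i => [//|a] _ han P Q.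
have ha : (a < n)%N by move: han n2; lia.
have hb : (a.+1 < n)%N by move: han n2; lia.
pose ia : 'I_n := Ordinal ha. pose ib : 'I_n := Ordinal hb.
have hab : ia != ib by rewrite -val_eqE /= neq_ltn ltnSn.
have Ma : forall j : 'I_n, switch_mx A B n a.+1 j ia =
   if j == ia then A else if j == ib then switchC A B else 0.
  move=> j; rewrite mxE /= eqxx !andbT -!val_eqE /= ?(gtn_eqF (ltnSn a)) ?(ltn_eqF (ltnSn a)) ?andbF.
  by case: eqP => // ja; case: eqP => // _; move/eqP/negbTE: ja => ->.
have Mb : forall j : 'I_n, switch_mx A B n a.+1 j ib =
   if j == ia then B else if j == ib then switchD A B else 0.
  move=> j; rewrite mxE /= eqxx !andbT -!val_eqE /= ?(gtn_eqF (ltnSn a)) ?(ltn_eqF (ltnSn a)) ?andbF.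
  by case: eqP => // ja; case: eqP => // ja1; move/eqP/negbTE: ja1; rewrite eq_sym => ->.
have Mo : forall j k : 'I_n, k != ia -> k != ib ->
   switch_mx A B n a.+1 j k = (j == k)%:R.
  move=> j k; rewrite -!val_eqE /= => /negbTE ka /negbTE kb.
  by rewrite mxE ka kb !andbF.
have Mr : forall j k : 'I_n, j != ia -> j != ib ->
   switch_mx A B n a.+1 j k = (j == k)%:R.
  move=> j k; rewrite -!val_eqE /= => /negbTE ka /negbTE kb.
  by rewrite mxE ka kb.
have hba : (ib == ia) = false by rewrite eq_sym (negbTE hab).
have BV : B * B^-1 = 1 by rewrite mulrV.
have eb : (n - 1 - a = (n - 1 - a.+1).+1)%N.
  by move: han n2; lia.
split.
- apply/rowP => k; rewrite !mxE.
  case: (eqVneq k ia) => [->|ka].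
    rewrite (sum2 hab) => [|j ja jb]; last by rewrite Ma (negbTE ja) (negbTE jb) mulr0.
    rewrite !Ma !mxE eqxx hba eqxx /= eb exprSr.
    rewrite /switchC -/P -mulrA -mulrDr; congr (_ * _).
    by rewrite mulrBr mulr1 addrC subrK.
  case: (eqVneq k ib) => [->|kb].
    rewrite (sum2 hab) => [|j ja jb]; last by rewrite Mb (negbTE ja) (negbTE jb) mulr0.
    rewrite !Mb !mxE eqxx hba eqxx /= eb exprSr.
    rewrite /switchD -/P -mulrA -mulrA -mulrDr.
    by rewrite addrC subrK mulr1.
  rewrite (sum1 k) => [|j jk]; last by rewrite Mo // (negbTE jk) mulr0.
  by rewrite Mo // eqxx mulr1 mxE.
- have BQ : B * Q = 1 - A by rewrite /Q mulrA BV mul1r.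
  have Ra : forall j : 'I_n, switch_mx A B n a.+1 ia j =
     if j == ia then A else if j == ib then B else 0.
    move=> j; rewrite mxE /= eqxx /= -!val_eqE /= ?(gtn_eqF (ltnSn a)) ?(ltn_eqF (ltnSn a)) ?andbF.
    by case: eqP => // ja; case: eqP => // ja1; move/eqP/negbTE: ja; rewrite eq_sym => ->.
  have Rb : forall j : 'I_n, switch_mx A B n a.+1 ib j =
     if j == ia then switchC A B else if j == ib then switchD A B else 0.
    move=> j; rewrite mxE /= eqxx /= -!val_eqE /= ?(gtn_eqF (ltnSn a)) ?(ltn_eqF (ltnSn a)) ?andbF /=.
    by case: eqP => // ja; case: eqP => // ja1; move/eqP/negbTE: ja1; rewrite eq_sym => ->.
  apply/colP => k; rewrite !mxE.
  case: (eqVneq k ia) => [->|ka].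
    rewrite (sum2 hab) => [|j ja jb]; last by rewrite Ra (negbTE ja) (negbTE jb) mul0r.
    rewrite !Ra !mxE eqxx hba eqxx /= exprS mulrA -mulrDl.
    have -> : B * Q = 1 - A by rewrite /Q mulrA BV mul1r.
    by rewrite addrC subrK mul1r.
  case: (eqVneq k ib) => [->|kb].
    rewrite (sum2 hab) => [|j ja jb]; last by rewrite Rb (negbTE ja) (negbTE jb) mul0r.
    rewrite !Rb !mxE eqxx hba eqxx /= exprS mulrA -mulrDl; congr (_ * _).
    rewrite /switchD /switchC -/P mulrBl mul1r -(mulrA P B Q) BQ.
    by rewrite addrC subrK.
  rewrite (sum1 k) => [|j jk]; last by rewrite Mr // eq_sym (negbTE jk) mul0r.
  by rewrite Mr // eqxx mul1r mxE.
Qed.
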